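(* (a) For every $k\ge 3$, on the range $F_k\le n<F_{k+1}$ the sequence $a(n)$ attains its minimum uniquely at $n=F_k$, i.e., $a(t)>a(F_k)$ for all $F_k<t<F_{k+1}$. (b) For every $k\ge 5$, on the range $F_k\le n<F_{k+1}$ the sequence $a(n)$ attains its maximum exactly at $n=F_k+1$ and $n=F_k+2$; in particular $a(F_k+1)=a(F_k+2)\ge a(t)$ for all $F_k\le t<F_{k+1}$, with equality only for $t\in\{F_k+1,F_k+2\}$.
   Context: Let $(F_n)_{n\ge 0}$ be the Fibonacci numbers: $F_0=0$, $F_1=1$, $F_n=F_{n-1}+F_{n-2}$ for $n\ge 2$. Define $(a(n))_{n\ge 0}$ (OEIS A105774) by $a(0)=0$, $a(1)=1$, and for $n\ge 2$, $a(n)=F_{j+1}-a(n-F_j)$, where $j\ge 2$ is the unique index with $F_j<n\le F_{j+1}$. *)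

(* Defs.v *)
From mathcomp Require Import all_boot all_order all_algebra.
Import GRing.Theory.
Local Open Scope ring_scope.

Fixpoint fib (n : nat) : nat :=
  match n with
  | 0 => 0
  | 1 => 1
  | (m.+1 as p).+1 => fib p + fib m
  end.

(* For n >= 2, the unique j >= 2 with F_j < n <= F_{j+1}:
   it is the least j >= 2 with n <= F_{j+1} (searched below n+2, which suffices
   since F_{j+1} >= j for j >= 1). *)
Definition fib_index (n : nat) : nat :=
  (2 + find (fun i => (n <= fib (i + 3))%N) (iota 0 n))%N.

(* a with fuel: a_fuel fuel n computes a(n) when fuel > n. *)
Fixpoint a_fuel (fuel : nat) (n : nat) : int :=
  match fuel with
  | 0 => 0
  | fuel'.+1 =>
    match n with
    | 0 => 0
    | 1 => 1
    | _ => (fib (fib_index n).+1)%:Z - a_fuel fuel' (n - fib (fib_index n))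
    end
  end.

(* OEIS A105774: a(0)=0, a(1)=1, a(n) = F_{j+1} - a(n - F_j) for n >= 2,
   where F_j < n <= F_{j+1}, j >= 2. *)
Definition a (n : nat) : int := a_fuel n.+1 n.

(* Main.v *)
Require Import Defs.
From mathcomp Require Import all_boot all_order all_algebra.
From mathcomp Require Import zify.
Import Order.TTheory GRing.Theory Num.Theory.
Local Open Scope ring_scope.

Lemma fibSS n : fib n.+2 = (fib n.+1 + fib n)%N.
Proof. by []. Qed.

Lemma fib_le1 n : (fib n <= fib n.+1)%N.
Proof. by case: n => [|n] //; rewrite fibSS; lia. Qed.

Lemma fib_mono m n : (m <= n)%N -> (fib m <= fib n)%N.
Proof.
move=> /subnK <-; elim: (n - m)%N => [|d IH] //.
by rewrite addSn; apply: leq_trans IH (fib_le1 _).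
Qed.
Arguments fib_mono {m n}.


Lemma fib_pos n : (0 < fib n.+1)%N.
Proof.
elim: n => [|n IH] //; rewrite fibSS; lia.
Qed.

Lemma fib_lt n : (2 <= n)%N -> (fib n < fib n.+1)%N.
Proof. case: n => [|[|n]] // _; rewrite (fibSS n.+1); have := fib_pos n; lia. Qed.
Arguments fib_lt {n}.


Lemma fib_ge n : (n <= fib n.+1)%N.
Proof.
suff : (n <= fib n.+1)%N /\ (n.+1 <= fib n.+2)%N by case.
elim: n => [|n [IH1 IH2]]; first by [].
split => //; rewrite (fibSS n.+1); have := fib_pos n.
case: n IH1 IH2 => [|n] //= IH1 IH2 H; lia.
Qed.

Lemma fib_idx_lt i j t : (fib i < t)%N -> (t <= fib j)%N -> (i < j)%N.
Proof.
move=> H1 H2; rewrite ltnNge; apply/negP => Hle.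
have := fib_mono Hle; lia.
Qed.
Arguments fib_idx_lt {i j t}.


Lemma fib_index_spec n : (2 <= n)%N ->
  [/\ (2 <= fib_index n)%N, (fib (fib_index n) < n)%N & (n <= fib (fib_index n).+1)%N].
Proof.
move=> Hn; rewrite /fib_index.
set p := (fun i => (n <= fib (i + 3))%N).
have Hhas : has p (iota 0 n).
  apply/hasP; exists n.-1; first by rewrite mem_iota; lia.
  rewrite /p; have := fib_ge n.+1; have -> : (n.-1 + 3 = n.+2)%N by lia.
  lia.
have Hf := nth_find 0 Hhas.
have Hs : (find p (iota 0 n) < n)%N by rewrite -[X in (_ < X)%N](size_iota 0 n) -has_find.
rewrite nth_iota // add0n in Hf.
split => //.
- case E: (find p (iota 0 n)) => [|i] //=.
  have := @before_find _ 0 p (iota 0 n) i; rewrite E nth_iota; last by lia.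
  rewrite /p add0n => /(_ (ltnSn i)) /negbT; rewrite -ltnNge.
  by have -> : (i + 3 = 2 + i.+1)%N by lia.
- by move: Hf; rewrite /p; have -> : (find p (iota 0 n) + 3 = (2 + find p (iota 0 n)).+1)%N by lia.
Qed.
Arguments fib_index_spec {n}.


Lemma idx_uniq n j j' : (2 <= j)%N -> (2 <= j')%N ->
  (fib j < n <= fib j.+1)%N -> (fib j' < n <= fib j'.+1)%N -> j = j'.
Proof.
move=> H1 H2 /andP[A B] /andP[C D].
have := fib_idx_lt A D; have := fib_idx_lt C B; lia.
Qed.
Arguments idx_uniq {n j j'}.


Lemma a_fuel_SS f n : a_fuel f.+1 n.+2 =
  (fib (fib_index n.+2).+1)%:Z - a_fuel f (n.+2 - fib (fib_index n.+2)).
Proof. by []. Qed.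

Lemma a_fuel_indep f n g : (n < f)%N -> (n < g)%N -> a_fuel f n = a_fuel g n.
Proof.
elim: f n g => [|f IH] n [|g] // Hf Hg.
case: n Hf Hg => [|[|n]] // Hf Hg.
rewrite !a_fuel_SS.
congr (_ - _); apply: IH.
- have := fib_pos (fib_index n.+2).-1.
  have := fib_index_spec (isT : (2 <= n.+2)%N); case=> H _ _.
  have -> : (fib_index n.+2).-1.+1 = fib_index n.+2 by lia.
  lia.
- have := fib_pos (fib_index n.+2).-1.
  have := fib_index_spec (isT : (2 <= n.+2)%N); case=> H _ _.
  have -> : (fib_index n.+2).-1.+1 = fib_index n.+2 by lia.
  lia.
Qed.

Lemma a_rec n j : (2 <= j)%N -> (fib j < n <= fib j.+1)%N ->
  a n = (fib j.+1)%:Z - a (n - fib j).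
Proof.
move=> Hj Hn.
have Hn2 : (2 <= n)%N.
  move/andP: Hn => [H _]; have := fib_mono Hj; rewrite /=; lia.
have [H1 H2 H3] := fib_index_spec Hn2.
have E := idx_uniq H1 Hj (introT andP (conj H2 H3)) Hn.
case: n Hn Hn2 H1 H2 H3 E => [|[|n]] // Hn _ H1 H2 H3 E.
rewrite /a a_fuel_SS E; congr (_ - _).
have Hp : (0 < fib j)%N by have := fib_pos j.-1; rewrite prednK //; lia.
apply: a_fuel_indep => //; lia.
Qed.
Arguments a_rec {n j}.


Lemma a1 : a 1 = 1. Proof. by []. Qed.

Lemma a_bnd t : (2 <= t)%N -> forall j, (2 <= j)%N -> (fib j < t <= fib j.+1)%N ->
  (fib j)%:Z <= a t /\ a t < (fib j.+1)%:Z.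
Proof.
elim: t {-2}t (leqnn t) => [|N IH] t Ht Ht2 j Hj Hjt; first by lia.
rewrite (a_rec Hj Hjt).
have Fj : (fib j.+1 = fib j + fib j.-1)%N.
  by rewrite -[in LHS](prednK (ltnW Hj)) fibSS prednK //; lia.
have Fp : (0 < fib j.-1)%N by have := fib_pos j.-2; rewrite prednK //; lia.
set r := (t - fib j)%N.
have Hr : (1 <= r <= fib j.-1)%N by rewrite /r; lia.
have [Hlo Hhi] : 1 <= a r /\ a r <= (fib j.-1)%:Z.
  have [E|H2r] : r = 1%N \/ (2 <= r)%N by lia.
  - by rewrite E a1; lia.
  - have [J1 J2 J3] := fib_index_spec H2r.
    have [] := IH r _ H2r _ J1 (introT andP (conj J2 J3)).
      have := fib_mono Hj; rewrite /r /=; lia.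
    have Hlt := fib_idx_lt J2 (proj2 (andP Hr)).
    have := fib_mono Hlt; have := fib_mono J1; rewrite /=; lia.
split; lia.
Qed.
Arguments a_bnd {t} _ {j}.


Lemma a_pos t : (1 <= t)%N -> 1 <= a t.
Proof.
case: t => [|[|t]] // _.
have [J1 J2 J3] := fib_index_spec (isT : (2 <= t.+2)%N).
have [] := a_bnd (isT : (2 <= t.+2)%N) J1 (introT andP (conj J2 J3)).
have := fib_mono J1; rewrite /=; lia.
Qed.

Lemma a_ge2 t : (3 <= t)%N -> 2 <= a t.
Proof.
move=> Ht.
have [J1 J2 J3] := fib_index_spec (ltnW Ht).
have [] := a_bnd (ltnW Ht) J1 (introT andP (conj J2 J3)).
have J : (3 <= fib_index t)%N.
  have [E|] : fib_index t = 2%N \/ (3 <= fib_index t)%N by lia.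
  - by move: J3; rewrite E /=; lia.
  - by [].
have := fib_mono J; rewrite /=; lia.
Qed.
Arguments a_ge2 {t}.


Lemma fib_ge2 k : (3 <= k)%N -> (2 <= fib k)%N.
Proof. by move=> Hk; have := fib_mono Hk. Qed.
Arguments fib_ge2 {k}.


Lemma aFk k : (3 <= k)%N -> a (fib k) < (fib k)%:Z.
Proof.
move=> Hk.
have H1 : (2 <= k.-1)%N by lia.
have H2 := fib_lt H1; rewrite prednK in H2; last by lia.
have H3 : (fib k.-1 < fib k <= fib k.-1.+1)%N by rewrite prednK //; lia.
have [_] := a_bnd (j := k.-1) (fib_ge2 Hk) H1 H3.
by rewrite prednK //; lia.
Qed.

Lemma a_sec k t : (3 <= k)%N -> (fib k < t <= fib k.+1)%N ->
  a t = (fib k.+1)%:Z - a (t - fib k).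
Proof. by move=> Hk; apply: a_rec; lia. Qed.
Arguments a_sec {k t}.



Theorem proposition14 :
  (forall k : nat, (3 <= k)%N ->
     forall t : nat, (fib k < t < fib k.+1)%N -> a (fib k) < a t) /\
  (forall k : nat, (5 <= k)%N ->
     a (fib k + 1) = a (fib k + 2) /\
     forall t : nat, (fib k <= t < fib k.+1)%N ->
       a t <= a (fib k + 1) /\
       (a t = a (fib k + 1) -> t = (fib k + 1)%N \/ t = (fib k + 2)%N)).
Proof.
split.
- move=> k Hk t /andP[A B].
  have Hk2 : (2 <= k)%N by lia.
  have [H _] := a_bnd (j := k) (leq_trans (fib_ge2 Hk) (ltnW A)) Hk2 (introT andP (conj A (ltnW B))).
  have := aFk _ Hk; lia.
- move=> k Hk.
  have Hk3 : (3 <= k)%N by lia.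
  have Fk : (fib k.+1 = fib k + fib k.-1)%N.
    by case: (k) Hk => [|[|k']] // _; rewrite (fibSS k'.+1).
  have F2 : (2 <= fib k.-1)%N by apply: fib_ge2; lia.
  have E1 : a (fib k + 1) = (fib k.+1)%:Z - 1.
    by rewrite (a_sec Hk3); [rewrite addKn a1 | lia].
  have E2 : a (fib k + 2) = (fib k.+1)%:Z - 1.
    by rewrite (a_sec Hk3); [rewrite addKn | lia].
  rewrite E1 E2; split => // t /andP[A B].
  have [Et|Lt] : t = fib k \/ (fib k < t)%N by lia.
  + rewrite Et; have := aFk _ Hk3; split; lia.
  + rewrite (a_sec Hk3); last by lia.
    have := a_pos (t - fib k) ltac:(lia).
    split; first by lia.
    move=> Heq.
    have [Hs|Hb] : (t - fib k <= 2)%N \/ (3 <= t - fib k)%N by lia.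
    * lia.
    * have := a_ge2 Hb; lia.
Qed.
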